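(* Let $n\geqslant 2$, $\lambda>0$, let $p_1,\ldots,p_M\in\mathbb{Z}^n$ be distinct points and $n_1,\ldots,n_M$ positive integers, and write $g=4\pi\sum_{j=1}^M n_j\delta_{p_j}$. Let $u$ be the maximal topological solution of the Chern–Simons equation $$\Delta u=\lambda e^u(e^u-1)+g\ \text{ on }\mathbb{Z}^n,\qquad \lim_{d(x)\to+\infty}u(x)=0$$ (i.e. the solution $u$ of this problem with $f\leqslant u$ for every other solution $f$ of this problem; such $u$ exists). Then the Abelian Higgs equation $$\Delta u'=\lambda(e^{u'}-1)+g\ \text{ on }\mathbb{Z}^n,\qquad \lim_{d(x)\to+\infty}u'(x)=0$$ has a unique solution $u'$, this solution satisfies $u'\in l^p(\mathbb{Z}^n)$ for every $1\leqslant p\leqslant\infty$ and $u\leqslant u'\leqslant 0$ on $\mathbb{Z}^n$, and, with $m=\ln(1+\frac{\lambda}{2n})$, for every $0<\epsilon<1$ one has $u'(x)=O(e^{-m(1-\epsilon)d(x)})$ as $d(x)\to+\infty$.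
   Context: $\mathbb{Z}^n$ is the integer lattice graph: vertices are the points of $\mathbb{Z}^n$, and $x\sim y$ iff $\sum_{i=1}^n|x_i-y_i|=1$. The distance is $d(x,y)=\sum_{i=1}^n|x_i-y_i|$ and $d(x)=d(x,0)$. The Laplacian is $\Delta u(x)=\sum_{y\sim x}(u(y)-u(x))$. $\delta_p$ denotes the function on $\mathbb{Z}^n$ equal to $1$ at $p$ and $0$ elsewhere. $l^p(\mathbb{Z}^n)$ denotes the usual sequence spaces on $\mathbb{Z}^n$. *)

(* Defs.v *)
From HB Require Import structures.
From mathcomp Require Import all_boot all_order all_algebra.
From mathcomp Require Import all_classical all_reals all_analysis.
Set Implicit Arguments. Unset Strict Implicit. Unset Printing Implicit Defensive.
Import Order.TTheory GRing.Theory Num.Theory.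
Local Open Scope ring_scope.

Definition pt (n : nat) := {ffun 'I_n -> int}.

Definition shift n (x : pt n) (i : 'I_n) (s : int) : pt n :=
  [ffun j => x j + (if j == i then s else 0)].

Definition dist0 n (x : pt n) : nat := \sum_(i < n) `|x i|%N.

Definition lap (R : realType) n (u : pt n -> R) (x : pt n) : R :=
  \sum_(i < n) ((u (shift x i 1) - u x) + (u (shift x i (-1)) - u x)).

Definition delta (R : realType) n (p : pt n) (x : pt n) : R :=
  if x == p then 1 else 0.

Definition gsrc (R : realType) n M (p : 'I_M -> pt n) (m : 'I_M -> nat)
  (x : pt n) : R :=
  4 * pi * \sum_(j < M) ((m j)%:R * delta R (p j) x).

Definition vanish_at_infty (R : realType) n (u : pt n -> R) : Prop :=
  forall e : R, 0 < e -> exists N : nat,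
    forall x : pt n, (N <= dist0 x)%N -> `|u x| < e.

Definition CS_sol (R : realType) n (lam : R) (g : pt n -> R) (u : pt n -> R) :=
  (forall x, lap u x = lam * expR (u x) * (expR (u x) - 1) + g x)
  /\ vanish_at_infty u.

Definition CS_max_sol (R : realType) n (lam : R) (g : pt n -> R) (u : pt n -> R) :=
  CS_sol lam g u /\ (forall f, CS_sol lam g f -> forall x, f x <= u x).

Definition AH_sol (R : realType) n (lam : R) (g : pt n -> R) (u : pt n -> R) :=
  (forall x, lap u x = lam * (expR (u x) - 1) + g x)
  /\ vanish_at_infty u.

Definition in_lp (R : realType) n (p : R) (u : pt n -> R) : Prop :=
  (\esum_(x in [set: pt n]) ((`|u x| `^ p)%:E) < +oo)%E.

Definition in_linf (R : realType) n (u : pt n -> R) : Prop :=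
  exists C : R, forall x, `|u x| <= C.

Definition bigO_exp_decay (R : realType) n (a : R) (u : pt n -> R) : Prop :=
  exists C : R, exists N : nat, forall x : pt n, (N <= dist0 x)%N ->
    `|u x| <= C * expR (- a * (dist0 x)%:R).

(* Main.v *)
Require Import Defs.
From HB Require Import structures.
From mathcomp Require Import all_boot all_order all_algebra.
From mathcomp Require Import all_classical all_reals all_analysis.
From mathcomp Require Import zify ring lra.
Import Order.TTheory GRing.Theory Num.Theory.
Import numFieldNormedType.Exports.
Local Open Scope ring_scope.
Set Implicit Arguments. Unset Strict Implicit. Unset Printing Implicit Defensive.

Section Basics.
Variable R : realType.

Lemma seq_max (T : eqType) (F : T -> R) (s : seq T) : forall a0,
  exists a, forall b, b \in a0 :: s -> F b <= F a.
Proof.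
elim: s => [|b s IH] a0.
  by exists a0 => b; rewrite inE => /eqP ->.
have [a Ha] := IH (if F a0 <= F b then b else a0).
exists a => c; rewrite !inE => /orP[/eqP ->|/orP[/eqP ->|cs]].
- apply: le_trans (Ha _ (mem_head _ _)); case: ifP => //; lra.
- apply: le_trans (Ha _ (mem_head _ _)); case: ifP => //; rewrite /=; move/negbT; rewrite -ltNge; lra.
- by apply: Ha; rewrite inE cs orbT.
Qed.

Lemma fin_max (T : finType) (t0 : T) (F : T -> R) : exists t1, forall t, F t <= F t1.
Proof.
have [a Ha] := seq_max F (enum T) t0.
by exists a => t; apply: Ha; rewrite inE mem_enum orbT.
Qed.

Variable n : nat.

Lemma abs_le_dist (x : pt n) i : (absz (x i) <= dist0 x)%N.
Proof. by rewrite /dist0 (bigD1 i) //= leq_addr. Qed.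

Definition boxpt (N : nat) (t : {ffun 'I_n -> 'I_(N + N).+1}) : pt n :=
  [ffun i => (t i : nat)%:Z - N%:Z].
Arguments boxpt : clear implicits.

Lemma boxpt_onto N (x : pt n) : (dist0 x <= N)%N -> exists t, x = boxpt N t.
Proof.
move=> hx.
exists [ffun i => inord (absz (x i + N%:Z)%R)].
apply/ffunP => i; rewrite /boxpt !ffunE.
have := abs_le_dist x i => hi.
rewrite inordK; last by (simpl; lia).
move: (x i) hi => z hz.
lia.
Qed.

Lemma box_max (N : nat) (F : pt n -> R) :
  exists x1, forall x, (dist0 x <= N)%N -> F x <= F x1.
Proof.
have [t1 Ht] := fin_max [ffun=> ord0] (fun t => F (boxpt N t)).
exists (boxpt N t1) => x /boxpt_onto [t ->]; exact: Ht.
Qed.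

Lemma vanish_max (F : pt n -> R) x0 : vanish_at_infty F -> 0 < F x0 ->
  exists x1, forall x, F x <= F x1.
Proof.
move=> hv h0; have [N HN] := hv _ h0.
have [x1 H1] := box_max N F.
have hx0 : (dist0 x0 <= N)%N.
  rewrite leqNgt; apply/negP => /ltnW /HN; rewrite ger0_norm ?ltxx //; lra.
exists x1 => x; case: (leqP N (dist0 x)) => hx.
  have := HN _ hx; have := H1 _ hx0; have := ler_norm (F x); lra.
by apply: H1; apply: ltnW.
Qed.

Lemma vanish_bounded (F : pt n -> R) : vanish_at_infty F ->
  exists B : R, 0 <= B /\ forall x, `|F x| <= B.
Proof.
move=> hv; have [N HN] := hv 1 ltr01.
have [x1 H1] := box_max N (fun x => `|F x|).
exists (1 + `|F x1|); split; first by rewrite addr_ge0.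
move=> x; case: (leqP N (dist0 x)) => hx.
  have := HN _ hx; have := normr_ge0 (F x1); lra.
have := H1 _ (ltnW hx); lra.
Qed.

End Basics.

Section Lap.
Variable R : realType.
Variable n : nat.
Implicit Types f g : pt n -> R.

Lemma lap_le0 f x : (forall y, f y <= f x) -> lap f x <= 0.
Proof.
move=> H; rewrite /lap; apply: sumr_le0 => i _.
have := H (Defs.shift x i 1); have := H (Defs.shift x i (-1)); lra.
Qed.

Lemma lap_sub f g x : lap (fun y => f y - g y) x = lap f x - lap g x.
Proof. by rewrite /lap -sumrB; apply: eq_bigr => i _; ring. Qed.

Lemma vanish_sub f g : vanish_at_infty f -> vanish_at_infty g ->
  vanish_at_infty (fun x => f x - g x).
Proof.
move=> hf hg e e0.
have e2 : 0 < e / 2 by rewrite divr_gt0.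
have [N1 H1] := hf _ e2; have [N2 H2] := hg _ e2.
exists (maxn N1 N2) => x; rewrite geq_max => /andP[h1 h2].
have := H1 _ h1; have := H2 _ h2; have := ler_normB (f x) (g x); lra.
Qed.

Lemma vanish_le f g : (forall x, `|g x| <= `|f x|) -> vanish_at_infty f ->
  vanish_at_infty g.
Proof.
move=> hle hf e e0; have [N HN] := hf _ e0; exists N => x hx.
exact: le_lt_trans (hle x) (HN _ hx).
Qed.

Variable M : nat.
Variable (p : 'I_M -> pt n) (m : 'I_M -> nat).

Lemma gsrc_ge0 x : 0 <= gsrc R p m x.
Proof.
rewrite /gsrc; apply: mulr_ge0; first by rewrite mulr_ge0 // ltW // pi_gt0.
apply: sumr_ge0 => j _; apply: mulr_ge0 => //; rewrite /delta; case: ifP => //.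
Qed.

Lemma gsrc_far : exists N, forall x, (N <= dist0 x)%N -> gsrc R p m x = 0.
Proof.
exists (\max_(j < M) dist0 (p j)).+1 => x hx.
rewrite /gsrc big1 ?mulr0 // => j _; rewrite /delta; case: eqP; last by rewrite mulr0.
move=> exj; move: hx; rewrite exj => hx.
have := @leq_bigmax _ (fun j => dist0 (p j)) j; rewrite /= => h.
by have := leq_trans hx h; rewrite ltnn.
Qed.

End Lap.

Section MaxPrinciple.
Variable R : realType.
Variable n : nat.
Variables (lam : R) (g : pt n -> R).
Hypothesis lam0 : 0 < lam.
Hypothesis g0 : forall x, 0 <= g x.

Lemma CS_le0 u : CS_sol lam g u -> forall x, u x <= 0.
Proof.
move=> [hu hv] x0; rewrite leNgt; apply/negP => h0.
have [x1 H1] := vanish_max hv h0.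
have := lap_le0 H1; rewrite hu.
have hx1 : 0 < u x1 by apply: lt_le_trans h0 (H1 x0).
have : 0 < lam * expR (u x1) * (expR (u x1) - 1).
  by rewrite !mulr_gt0 ?expR_gt0 // subr_gt0 expR_gt1.
have := g0 x1; lra.
Qed.

Lemma AH_le v1 v2 : AH_sol lam g v1 -> AH_sol lam g v2 -> forall x, v1 x <= v2 x.
Proof.
move=> [h1 hv1] [h2 hv2] x0; rewrite leNgt; apply/negP => h0.
have hv := vanish_sub hv1 hv2.
have h0' : 0 < v1 x0 - v2 x0 by rewrite subr_gt0.
have [x1 H1] := vanish_max hv h0'.
have := lap_le0 H1; rewrite lap_sub h1 h2.
have hx1 : v2 x1 < v1 x1.
  have := H1 x0; lra.
have : expR (v2 x1) < expR (v1 x1) by rewrite ltr_expR.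
move=> he; have : 0 < lam * (expR (v1 x1) - expR (v2 x1)) by rewrite mulr_gt0 // subr_gt0.
lra.
Qed.

End MaxPrinciple.

Lemma exp_lip (R : realType) (a b : R) : a <= b -> b <= 0 -> expR b - expR a <= b - a.
Proof.
move=> hab hb.
have hE : expR b <= 1 by rewrite -expR0 ler_expR.
have hD : expR (a - b) <= 1 by rewrite -expR0 ler_expR subr_le0.
have h1 := expR_ge1Dx (a - b).
have ea : expR a = expR b * expR (a - b) by rewrite -expRD; congr expR; ring.
rewrite ea.
have hE0 := expR_gt0 b.
have : 0 <= (1 - expR b) * (1 - expR (a - b)) by rewrite mulr_ge0 // subr_ge0.
nra.
Qed.

Lemma lap_expand (R : realType) n (f : pt n -> R) x :
  lap f x = \sum_(i < n) (f (Defs.shift x i 1) + f (Defs.shift x i (-1))) - 2 * n%:R * f x.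
Proof.
rewrite /lap.
have -> : 2 * n%:R * f x = \sum_(i < n) (2 * f x).
  by rewrite sumr_const card_ord -mulr_natr; ring.
by rewrite -sumrB; apply: eq_bigr => i _; ring.
Qed.

Unset Implicit Arguments.
Section Existence.
Local Open Scope classical_set_scope.
Local Open Scope ring_scope.
Variable R : realType.
Variable n : nat.
Variables (lam : R) (g : pt n -> R) (u : pt n -> R).
Hypothesis lam0 : 0 < lam.
Hypothesis g0 : forall x, 0 <= g x.
Hypothesis uCS : CS_sol lam g u.

Let c : R := 2 * n%:R + lam.
Let c0 : 0 < c.
Proof. by rewrite /c ltr_wpDl // mulr_ge0. Qed.

Definition Sop (w : pt n -> R) : pt n -> R := fun x =>
  (\sum_(i < n) (w (Defs.shift x i 1) + w (Defs.shift x i (-1))) - g x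
     - lam * (expR (w x) - 1) + lam * w x) / c.

Lemma S_mono v1 v2 : (forall x, v1 x <= v2 x) -> (forall x, v2 x <= 0) ->
  forall x, Sop v1 x <= Sop v2 x.
Proof.
move=> h12 h2 x; rewrite /Sop ler_pdivrMr // divfK ?gt_eqF //.
have hs : \sum_(i < n) (v1 (Defs.shift x i 1) + v1 (Defs.shift x i (-1)))
   <= \sum_(i < n) (v2 (Defs.shift x i 1) + v2 (Defs.shift x i (-1))).
  by apply: ler_sum => i _; apply: lerD.
have he := exp_lip (h12 x) (h2 x).
have : 0 <= lam * ((v2 x - v1 x) - (expR (v2 x) - expR (v1 x))).
  by apply: mulr_ge0; [exact: ltW | rewrite subr_ge0].
lra.
Qed.

Lemma u_le0 x : u x <= 0.
Proof. exact: (CS_le0 lam0 g0 uCS). Qed.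

Lemma S_sub x : u x <= Sop u x.
Proof.
case: uCS => hu _.
rewrite /Sop ler_pdivlMr //.
have := hu x; rewrite lap_expand.
have : 0 <= lam * (expR (u x) - 1) ^+ 2.
  by apply: mulr_ge0; [exact: ltW | exact: sqr_ge0].
rewrite /c; nra.
Qed.

Lemma S_le0 v : (forall x, v x <= 0) -> forall x, Sop v x <= 0.
Proof.
move=> hv x; apply: le_trans (S_mono v (fun _ => 0) hv (fun _ => lexx 0) x) _.
rewrite /Sop ler_pdivrMr // mul0r big1 ?expR0; last by move=> *; rewrite addr0.
have := g0 x; lra.
Qed.

Definition W k := iter k Sop u.

Lemma W_props k : (forall x, W k x <= 0) /\ (forall x, W k x <= W k.+1 x).
Proof.
elim: k => [|k [IH1 IH2]].
  by split => x; [exact: u_le0| exact: S_sub].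
have h1 : forall x, W k.+1 x <= 0 by move=> x; exact: S_le0.
split => // x; exact: S_mono.
Qed.

Lemma u_le_W k x : u x <= W k x.
Proof.
elim: k => [|k IH] //; apply: le_trans IH _; exact: (W_props k).2.
Qed.

Definition wl x : R := sup (range (fun k => W k x)).

Lemma W_cvg x : (fun k => W k x) @ \oo --> wl x.
Proof.
apply: nondecreasing_cvgn.
  by apply/nondecreasing_seqP => k; exact: (W_props k).2.
by exists 0 => _ [k _ <-]; exact: (W_props k).1.
Qed.

Lemma wl_le0 x : wl x <= 0.
Proof.
apply: ge_sup; first by exists (W 0 x), 0%N.
by move=> _ [k _ <-]; exact: (W_props k).1.
Qed.

Lemma W_le_wl k x : W k x <= wl x.
Proof.
apply: sup_upper_bound; last by exists k.
split; first by exists (W 0 x), 0%N.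
by exists 0 => _ [j _ <-]; exact: (W_props j).1.
Qed.

Lemma u_le_wl x : u x <= wl x.
Proof. exact: le_trans (u_le_W 0 x) (W_le_wl 0 x). Qed.

Lemma cvg_sum_ord (F : nat -> 'I_n -> R) (a : 'I_n -> R) :
  (forall i, F ^~ i @ \oo --> a i) ->
  (fun k => \sum_(i < n) F k i) @ \oo --> \sum_(i < n) a i.
Proof.
move=> h; rewrite /index_enum; elim: (Finite.enum _) => [|i s IH].
  by under eq_fun do rewrite big_nil; rewrite big_nil; exact: cvg_cst.
under eq_fun do rewrite big_cons; rewrite big_cons.
exact: cvgD.
Qed.

Lemma S_cvg x : (fun k => Sop (W k) x) @ \oo --> Sop wl x.
Proof.
rewrite /Sop; apply: cvgMr_tmp.
have hx := W_cvg x.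
apply: cvgD; last by apply: cvgMl_tmp; exact: hx.
apply: cvgB; last first.
  apply: cvgMl_tmp; apply: cvgB; last exact: cvg_cst.
  by apply: (@continuous_cvg _ _ _ _ _ (fun k => W k x) expR); [exact: continuous_expR | exact: hx].
apply: cvgB; last exact: cvg_cst.
apply: cvg_sum_ord => i; apply: cvgD; [exact: (W_cvg (Defs.shift x i 1)) | exact: (W_cvg (Defs.shift x i (-1)))].
Qed.

Lemma wl_fix x : wl x = Sop wl x.
Proof.
have h1 := W_cvg x.
have h2 : (fun k => W k.+1 x) @ \oo --> Sop wl x by exact: S_cvg.
rewrite -cvg_shiftS in h1.
exact: (cvg_unique _ h1 h2).
Qed.

Lemma wl_AH : AH_sol lam g wl.
Proof.
split.
  move=> x; have := wl_fix x; rewrite /Sop lap_expand => h.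
  have : wl x * c = \sum_(i < n) (wl (Defs.shift x i 1) + wl (Defs.shift x i (-1))) - g x
     - lam * (expR (wl x) - 1) + lam * wl x.
    by rewrite {1}h -mulrA mulVf ?mulr1 // gt_eqF.
  rewrite /c; lra.
apply: (vanish_le (f := u)); last by case: uCS.
move=> x; rewrite !ler0_norm ?wl_le0 ?u_le0 //; rewrite lerN2; exact: u_le_wl.
Qed.

End Existence.

Set Implicit Arguments.
Section Decay.
Local Open Scope ring_scope.
Variable R : realType.
Variable n : nat.

Lemma dist_shift (x : pt n) i s :
  (dist0 (Defs.shift x i s) + absz (x i) = dist0 x + absz (x i + s)%R)%N.
Proof.
rewrite /dist0 (bigD1 i) // [in RHS](bigD1 i) //= /Defs.shift ffunE eqxx.
rewrite (eq_bigr (fun j => absz (x j))); last by move=> j /negbTE hj; rewrite ffunE hj addr0.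
set S := (\sum_(j < n | j != i) absz (x j))%N.
lia.
Qed.

Lemma dist_cases (x : pt n) i :
  let D := dist0 x in let D1 := dist0 (Defs.shift x i 1) in
  let D2 := dist0 (Defs.shift x i (-1)) in
  [\/ D1 = D.+1 /\ D2.+1 = D, D1.+1 = D /\ D2 = D.+1 | D1 = D.+1 /\ D2 = D.+1].
Proof.
move=> D D1 D2.
have h1 := dist_shift x i 1; have h2 := dist_shift x i (-1).
rewrite -/D -/D1 -/D2 in h1 h2.
move: (x i) h1 h2 => z h1 h2.
case: (ltrgtP z 0) => hz.
- apply: Or32; lia.
- apply: Or31; lia.
- apply: Or33; lia.
Qed.

Lemma lap_lin (f h : pt n -> R) k x :
  lap (fun y => f y + k * h y) x = lap f x + k * lap h x.
Proof. by rewrite /lap mulr_sumr -big_split /=; apply: eq_bigr => i _; ring. Qed.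

Lemma lap_opp (f : pt n -> R) x : lap (fun y => - f y) x = - lap f x.
Proof. by rewrite /lap -sumrN; apply: eq_bigr => i _; ring. Qed.

Variable a : R.
Hypothesis a0 : 0 < a.

Definition Ed (x : pt n) : R := expR (- a * (dist0 x)%:R).

Lemma Ed_step (x : pt n) k : Ed x = expR (- a * k%:R) * expR (a * (k%:R - (dist0 x)%:R)).
Proof. by rewrite -expRD; congr expR; ring. Qed.

Lemma lap_Ed x : lap Ed x <= n%:R * (expR a - 1) * Ed x.
Proof.
have hea : 1 <= expR a by rewrite -expR0 ler_expR ltW.
have he1 : expR (- a) <= 1 by rewrite -expR0 ler_expR oppr_le0 ltW.
have hee : expR a * expR (- a) = 1 by rewrite -expRD subrr expR0.
have hE := expR_gt0 (- a * (dist0 x)%:R).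
have up y : dist0 y = (dist0 x).+1 -> Ed y = Ed x * expR (- a).
  by move=> h; rewrite /Ed h -expRD; congr expR; rewrite -addn1 natrD; ring.
have dn y : (dist0 y).+1 = dist0 x -> Ed y = Ed x * expR a.
  by move=> h; rewrite /Ed -h -expRD; congr expR; rewrite -addn1 natrD; ring.
rewrite (_ : n%:R * (expR a - 1) * Ed x = \sum_(i < n) ((expR a - 1) * Ed x)); last first.
  by rewrite sumr_const card_ord -[in RHS]mulr_natl mulrA.
rewrite /lap.
rewrite ler_sum // => i _.
have := dist_cases x i; rewrite /Ed in up dn *.
case=> [[/up -> /dn ->]|[/dn -> /up ->]|[/up -> /up ->]]; nra.
Qed.

End Decay.

Section Decay2.
Local Open Scope ring_scope.
Variable R : realType.
Variable n : nat.
Variable a : R.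
Hypothesis a0 : 0 < a.

Lemma Ed_vanish (C : R) : 0 < C -> vanish_at_infty (fun x : pt n => C * Ed a x).
Proof.
move=> C0 e e0.
set y := - ln (e / C) / a.
exists (Num.Def.trunc y).+1 => x hx.
have hd : y < (dist0 x)%:R.
  by apply: lt_le_trans (truncnS_gt y) _; rewrite ler_nat.
have h1 : - ln (e / C) < (dist0 x)%:R * a by rewrite -ltr_pdivrMr.
have h2 : expR (- a * (dist0 x)%:R) < e / C.
  rewrite -[X in _ < X]lnK ?posrE ?divr_gt0 // ltr_expR; lra.
have hE := expR_gt0 (- a * (dist0 x)%:R).
rewrite /Ed ger0_norm ?mulr_ge0 ?ltW //.
by rewrite mulrC -ltr_pdivlMr.
Qed.

Variables (lam : R) (g w : pt n -> R).
Hypothesis lam0 : 0 < lam.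
Hypothesis ha : n%:R * (expR a - 1) <= lam / 2.
Hypothesis gfar : exists N0, forall x, (N0 <= dist0 x)%N -> g x = 0.
Hypothesis hw : AH_sol lam g w.
Hypothesis wle0 : forall x, w x <= 0.

Definition zf (C : R) (x : pt n) : R := w x + C * Ed a x.

Lemma decay_bound : exists C, 0 < C /\ forall x, `|w x| <= C * Ed a x.
Proof.
case: hw => hw' hv.
have [N0 HN0] := gfar.
have [N1 HN1] := hv (1/2) ltac:(lra).
set N := maxn N0 N1.
have far x : (N <= dist0 x)%N -> lap w x <= lam / 2 * w x.
  move=> hx; rewrite hw' (HN0 x) ?addr0; last by apply: leq_trans hx; exact: leq_maxl.
  have h1 := HN1 x (leq_trans (leq_maxr N0 N1) hx).
  rewrite ler0_norm ?wle0 // in h1.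
  have e1 := expR_ge1Dx (w x).
  have e2 := expR_ge1Dx (- w x).
  have ee : expR (w x) * expR (- w x) = 1 by rewrite -expRD subrr expR0.
  have ep := expR_gt0 (w x).
  have k1 : 0 <= expR (w x) * (expR (- w x) - (1 - w x)).
    by apply: mulr_ge0; [exact: ltW | rewrite subr_ge0].
  have k2 : 0 <= (- w x) * (expR (w x) - 1/2).
    apply: mulr_ge0; [by rewrite oppr_ge0 | rewrite subr_ge0; lra].
  have k3 : expR (w x) - 1 <= w x / 2 by nra.
  have : 0 <= lam * (w x / 2 - (expR (w x) - 1)).
    by apply: mulr_ge0; [exact: ltW | rewrite subr_ge0].
  lra.
have [B [B0 HB]] := vanish_bounded hv.
set C : R := (B + 1) * expR (a * N%:R).
have C0 : 0 < C by rewrite mulr_gt0 ?expR_gt0 //; lra.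
have nearb x : (dist0 x < N)%N -> - w x <= C * Ed a x.
  move=> hx.
  have hCE : C * Ed a x = (B + 1) * expR (a * (N%:R - (dist0 x)%:R)).
    by rewrite /C /Ed -mulrA -expRD; congr (_ * expR _); ring.
  have h1 : 1 <= expR (a * (N%:R - (dist0 x)%:R)).
    apply: le_trans (expR_ge1Dx _); rewrite lerDl.
    apply: mulr_ge0; [exact: ltW | rewrite subr_ge0 ler_nat; exact: ltnW].
  have := HB x; rewrite ler0_norm ?wle0 // hCE => hb.
  have : 0 <= (B + 1) * (expR (a * (N%:R - (dist0 x)%:R)) - 1).
    by apply: mulr_ge0; [lra | rewrite subr_ge0].
  lra.
clearbody C.
have hz : forall x, 0 <= zf C x.
  move=> x0; rewrite leNgt; apply/negP => hx0.
  have hf : vanish_at_infty (fun x => - zf C x).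
    have hw2 : vanish_at_infty (fun x => - w x).
      by apply: (vanish_le (f := w)) => // x; rewrite normrN.
    apply: (vanish_le (f := fun x => - w x - C * Ed a x)); last first.
      exact: vanish_sub hw2 (Ed_vanish C0).
    by move=> x; rewrite /zf opprD.
  have hx0' : 0 < - zf C x0 by rewrite oppr_gt0.
  have [x1 H1] := vanish_max hf hx0'.
  have hl := lap_le0 H1; rewrite lap_opp oppr_le0 in hl.
  have hz1 : zf C x1 < 0 by rewrite -oppr_gt0; exact: lt_le_trans hx0' (H1 x0).
  case: (ltnP (dist0 x1) N) => hN.
    have := nearb x1 hN; rewrite /zf in hz1; lra.
  have hlz : lap (zf C) x1 = lap w x1 + C * lap (Ed a) x1 by rewrite /zf lap_lin.
  have hE := expR_gt0 (- a * (dist0 x1)%:R).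
  have hLE : lap (Ed a) x1 <= lam / 2 * Ed a x1.
    apply: le_trans (lap_Ed a0 x1) _; apply: ler_wpM2r; first by rewrite /Ed ltW.
    exact: ha.
  have : C * lap (Ed a) x1 <= C * (lam / 2 * Ed a x1) by rewrite ler_wpM2l // ltW.
  have := far x1 hN.
  have : 0 < lam / 2 * (- zf C x1) by apply: mulr_gt0; [rewrite divr_gt0 | rewrite oppr_gt0].
  rewrite /zf in hz1 hl hlz *; lra.
exists C; split => // x; rewrite ler0_norm ?wle0 //.
have := hz x; rewrite /zf; lra.
Qed.

End Decay2.

Set Implicit Arguments.
Section Summ.
Local Open Scope ring_scope.
Variable R : realType.
Variable n : nat.

Definition psi L (t : {ffun 'I_n -> 'I_L.+1 * bool}) : pt n :=
  [ffun i => if (t i).2 then ((t i).1 : nat)%:Z else - (((t i).1 : nat)%:Z + 1)].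

Definition chi L (x : pt n) : {ffun 'I_n -> 'I_L.+1 * bool} :=
  [ffun i => (inord (if (0 <= x i)%R then absz (x i) else (absz (x i)).-1), (0 <= x i)%R)].

Lemma psi_chi L x : (dist0 x <= L)%N -> psi (chi L x) = x.
Proof.
move=> hx; apply/ffunP => i; rewrite /psi /chi !ffunE /=.
have := abs_le_dist x i; move: (x i) => z hz.
case h0: (0 <= z)%R => /=; rewrite inordK; lia.
Qed.

Lemma psi_abs L (t : {ffun 'I_n -> 'I_L.+1 * bool}) i : (nat_of_ord (t i).1 <= absz (psi t i))%N.
Proof. rewrite /psi ffunE; case: (t i).2 => //; move: ((t i).1 : nat) => k; lia. Qed.

Lemma geo (r : R) N : 0 <= r -> r < 1 -> \sum_(k < N) r ^+ k <= (1 - r)^-1.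
Proof.
move=> r0 r1.
have e : (\sum_(k < N) r ^+ k) * (1 - r) = 1 - r ^+ N.
  elim: N => [|N IH]; first by rewrite big_ord0 expr0; ring.
  by rewrite big_ord_recr /= mulrDl IH exprS; ring.
rewrite -div1r ler_pdivlMr ?subr_gt0 // e.
have := exprn_ge0 N r0; lra.
Qed.

Variable b : R.
Hypothesis b0 : 0 < b.
Let r := expR (- b).
Let G : R := \prod_(i < n) (2 / (1 - r)).

Lemma box_sum L : \sum_(t : {ffun 'I_n -> 'I_L.+1 * bool})
   \prod_(i < n) expR (- b * (((t i).1 : nat)%:R)) <= G.
Proof.
rewrite -(bigA_distr_bigA (fun (i : 'I_n) (j : 'I_L.+1 * bool) => expR (- b * ((j.1 : nat)%:R)))) /=.
apply: ler_prod => i _; apply/andP; split.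
  by apply: sumr_ge0 => j _; rewrite ltW // expR_gt0.
rewrite -(pair_bigA _ (fun (k : 'I_L.+1) (s : bool) => expR (- b * ((k : nat)%:R)))) /=.
under eq_bigr do rewrite big_bool /= expRM_natr.
have r0 : 0 <= r by rewrite ltW // expR_gt0.
have r1 : r < 1 by rewrite /r -expR0 ltr_expR oppr_lt0.
have := geo L.+1 r0 r1.
rewrite -/r.
have -> : \sum_(i0 < L.+1) (r ^+ i0 + r ^+ i0) = 2 * \sum_(k < L.+1) r ^+ k.
  by rewrite mulr_sumr; apply: eq_bigr => k _; ring.
rewrite mulrC ler_pdivlMr ?subr_gt0 //.
move=> h; rewrite -div1r ler_pdivlMr ?subr_gt0 // in h.
nra.
Qed.

Lemma seq_bound (f : pt n -> R) (K : R) : (forall x, 0 <= f x) -> 0 <= K ->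
  (forall x, f x <= K * expR (- b * (dist0 x)%:R)) ->
  forall s : seq (pt n), uniq s -> \sum_(x <- s) f x <= K * G.
Proof.
move=> f0 K0 hf s us.
set L := \max_(x <- s) dist0 x.
have hL : forall x, x \in s -> (dist0 x <= L)%N.
  by move=> x xs; exact: (@leq_bigmax_seq _ s xpredT (@dist0 n) x xs isT).
have -> : \sum_(x <- s) f x = \sum_(x <- s) f (psi (chi L x)).
  by apply: eq_big_seq => x xs; rewrite psi_chi // hL.
rewrite -(big_map (chi L) xpredT (fun t => f (psi t))).
rewrite big_uniq /=; last first.
  rewrite map_inj_in_uniq // => x y xs ys e.
  by rewrite -(psi_chi (hL _ xs)) e psi_chi // hL.
apply: le_trans (_ : \sum_(t : {ffun 'I_n -> 'I_L.+1 * bool}) f (psi t) <= _).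
  rewrite [X in _ <= X](bigID (fun t => t \in [seq chi L i | i <- s])) /= lerDl.
  by apply: sumr_ge0 => t _.
apply: le_trans (_ : \sum_(t : {ffun 'I_n -> 'I_L.+1 * bool})
   K * \prod_(i < n) expR (- b * (((t i).1 : nat)%:R)) <= _); last first.
  by rewrite -mulr_sumr ler_wpM2l // box_sum.
apply: ler_sum => t _; apply: le_trans (hf _) _; apply: ler_wpM2l => //.
rewrite -expR_sum ler_expR /dist0 natr_sum mulr_sumr ler_sum // => i _.
rewrite !mulNr lerN2; apply: ler_wpM2l; [exact: ltW | rewrite ler_nat; exact: psi_abs].
Qed.

Lemma esum_bound (f : pt n -> R) (K : R) : (forall x, 0 <= f x) -> 0 <= K ->
  (forall x, f x <= K * expR (- b * (dist0 x)%:R)) ->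
  (\esum_(x in [set: pt n]) (f x)%:E < +oo)%E.
Proof.
move=> f0 K0 hf.
apply: (@le_lt_trans _ _ (K * G)%:E); last exact: ltry.
apply: ge_ereal_sup => _ [X [finX _] <-].
rewrite fsumEFin // lee_fin fsbig_finite //.
apply: seq_bound => //; exact: finmap.fset_uniq.
Qed.

End Summ.

Unset Implicit Arguments.

Theorem theorem1p2 (R : realType) (n : nat) (lam : R) (M : nat)
  (p : 'I_M -> pt n) (m : 'I_M -> nat) (u : pt n -> R) :
  (2 <= n)%N -> 0 < lam -> injective p -> (forall j, (0 < m j)%N) ->
  CS_max_sol lam (gsrc R p m) u ->
  exists u' : pt n -> R,
    [/\ AH_sol lam (gsrc R p m) u',
        (forall v, AH_sol lam (gsrc R p m) v -> v = u'),
        (forall q : R, 1 <= q -> in_lp q u') /\ in_linf u',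
        (forall x, u x <= u' x /\ u' x <= 0) &
        (forall eps : R, 0 < eps < 1 ->
           bigO_exp_decay ((ln (1 + lam / (2 * n%:R))) * (1 - eps)) u')].
Proof.
move=> n2 lam0 _ _ [uCS _].
set g := gsrc R p m.
have g0 : forall x, 0 <= g x by move=> x; exact: gsrc_ge0.
have gfar := gsrc_far R p m.
set w := wl R n lam g u.
have hw : AH_sol lam g w by exact: wl_AH.
have wle0 : forall x, w x <= 0 by exact: wl_le0.
have n0 : (0 : R) < n%:R by rewrite ltr0n; lia.
set a := ln (1 + lam / (2 * n%:R)).
have hpos : 1 < 1 + lam / (2 * n%:R).
  by rewrite ltrDl divr_gt0 // mulr_gt0.
have a0 : 0 < a by rewrite /a ln_gt0.
have ea : expR a = 1 + lam / (2 * n%:R).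
  by rewrite /a lnK // posrE; lra.
have ha : forall a', a' <= a -> n%:R * (expR a' - 1) <= lam / 2.
  move=> a' ha'.
  have : expR a' <= expR a by rewrite ler_expR.
  rewrite ea => h.
  have e : n%:R * (lam / (2 * n%:R)) = lam / 2.
    by field; rewrite gt_eqF.
  have : n%:R * (expR a' - 1) <= n%:R * (lam / (2 * n%:R)).
    by apply: ler_wpM2l; [exact: ltW | lra].
  lra.
exists w; split => //.
- move=> v hv; apply/funext => x; apply/le_anti/andP; split.
    exact: (AH_le lam0 hv hw).
  exact: (AH_le lam0 hw hv).
- split; last first.
    have [B [_ HB]] := vanish_bounded hw.2; by exists B.
  move=> q q1.
  have [C [C0 HC]] := decay_bound a0 lam0 (ha a (lexx a)) gfar hw wle0.
  have q0 : 0 < q by lra.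
  apply: (@esum_bound R n (a * q) _ _ (C `^ q)).
  + by rewrite mulr_gt0.
  + by move=> x; exact: powR_ge0.
  + exact: powR_ge0.
  move=> x.
  have hE := expR_gt0 (- a * (dist0 x)%:R).
  have h1 : `|w x| `^ q <= (C * Ed a x) `^ q.
    apply: ge0_ler_powR; first exact: ltW.
    - by rewrite nnegrE.
    - by rewrite nnegrE mulr_ge0 ?ltW.
    exact: HC.
  have h2 : (C * Ed a x) `^ q = C `^ q * expR (- (a * q) * (dist0 x)%:R).
    rewrite powRM ?ltW // /Ed -expRM; congr (_ * expR _); ring.
  by rewrite -h2.
- by move=> x; split; [exact: u_le_wl | exact: wle0].
move=> eps /andP[e0 e1].
set a' := a * (1 - eps).
have a'0 : 0 < a' by rewrite mulr_gt0 // subr_gt0.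
have a'a : a' <= a.
  have : 0 <= a * eps by rewrite mulr_ge0 ?ltW.
  rewrite /a'; lra.
have [C [C0 HC]] := decay_bound a'0 lam0 (ha a' a'a) gfar hw wle0.
by exists C, 0%N => x _; exact: HC.
Qed.
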